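(* Let $n\ge3$, $\gamma<1$ real, and $z_1,\dots,z_n\in\mathbb{C}$ not all zero with $\frac{\gamma}{n}\big(\sum_\ell z_\ell\big)^2=\sum_\ell z_\ell^2$. Then for each $N$ with $3\le N\le n$ there exists a full lift of $(z_1,\dots,z_n;\gamma)$ in $\mathbb{R}^N$. Moreover, for $N=3$: suppose $$n\sum_\ell|z_\ell|^2+(\gamma-2)\Big|\sum_\ell z_\ell\Big|^2\neq0 .$$ Put $\rho=\frac12\sum_\ell|z_\ell|^2-\frac{\gamma}{2n}\big|\sum_\ell z_\ell\big|^2$, $\sigma=\gamma\rho/(1-\gamma)$, $u_1=\sum_\ell\alpha_\ell/\sqrt{n(\sigma+\rho)}$, $u_2=\sum_\ell\beta_\ell/\sqrt{n(\sigma+\rho)}$, $u_3=\sqrt{1-u_1^2-u_2^2}$, let $A$ be the $3\times n$ real matrix with rows $(\alpha_1,\dots,\alpha_n)$, $(\beta_1,\dots,\beta_n)$, $(1,\dots,1)$, and $\vec b=u_3\,(\sigma u_1,\ \sigma u_2,\ \sqrt{n(\sigma+\rho)})^t$. Then $u_3>0$, $A$ has rank $3$, and the lifts in $\mathbb{R}^3$ are exactly the matrices $W$ with rows $(\alpha_\ell)$, $(\beta_\ell)$, $\vec t^{\,t}$ where $\vec t=\pm A^t(AA^t)^{-1}\vec b$, i.e. $\vec t$ is the minimal Euclidean norm solution of $A\vec t=\pm\vec b$; in particular the lift in $\mathbb{R}^3$ is unique up to the sign $\vec t\mapsto-\vec t$.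
   Context: Write $z_\ell=\alpha_\ell+i\beta_\ell$ with $\alpha_\ell,\beta_\ell$ real. For $N\ge3$, a lift of $(z_1,\dots,z_n;\gamma)$ in $\mathbb{R}^N$ is a real $N\times n$ matrix $W=(\vec x_1|\cdots|\vec x_n)$ whose first row is $(\alpha_1,\dots,\alpha_n)$ and second row is $(\beta_1,\dots,\beta_n)$ (so $z_\ell$ is the orthogonal projection $y\mapsto y_1+iy_2$ of $\vec x_\ell$), such that for some unit vector $\vec u\in\mathbb{R}^N$ and reals $\rho>0$, $\sigma$ with $\rho+\sigma>0$ and $\gamma=\sigma/(\sigma+\rho)$: $WW^t=\rho I_N+\sigma\vec u\vec u^{\,t}$ and $\sum_\ell\vec x_\ell=\sqrt{n(\sigma+\rho)}\,\vec u$. (Equivalently, $W$ is the matrix of a configured star in $\mathbb{R}^N$ with internal vertex $0$ whose external vertices project to the $z_\ell$, with invariant $\sigma/(\sigma+\rho)=\gamma$.) The lift is full if the external vertices do not lie in a proper linear subspace, i.e. $W$ has rank $N$. *)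

(* Defs.v *)
(* Real numbers are modelled by an arbitrary real closed field
   R : rcfType (the statement is purely algebraic: sqrt, ranks, inverses).
   A complex number z_l is given by its real and imaginary parts al l, be l. *)
From HB Require Import structures.
From mathcomp Require Import all_boot all_order all_algebra.
Set Implicit Arguments. Unset Strict Implicit. Unset Printing Implicit Defensive.
Import Order.TTheory GRing.Theory Num.Theory.
Local Open Scope ring_scope.

Section Defs.
Variable R : rcfType.

Definition cadd (x y : R * R) : R * R := (x.1 + y.1, x.2 + y.2).
Definition cmul (x y : R * R) : R * R := (x.1 * y.1 - x.2 * y.2, x.1 * y.2 + x.2 * y.1).
Definition cscale (r : R) (x : R * R) : R * R := (r * x.1, r * x.2).
Definition cnorm2 (x : R * R) : R := x.1 ^+ 2 + x.2 ^+ 2.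

Definition zof n (al be : 'I_n -> R) (l : 'I_n) : R * R := (al l, be l).
Definition csum n (al be : 'I_n -> R) : R * R := (\sum_l al l, \sum_l be l).
Definition csumsq n (al be : 'I_n -> R) : R * R :=
  (\sum_l (cmul (zof al be l) (zof al be l)).1,
   \sum_l (cmul (zof al be l) (zof al be l)).2).

Definition is_lift (N n : nat) (al be : 'I_n -> R) (g : R) (W : 'M[R]_(N, n)) : Prop :=
  (forall (i : 'I_N) (j : 'I_n), val i = 0%N -> W i j = al j) /\
  (forall (i : 'I_N) (j : 'I_n), val i = 1%N -> W i j = be j) /\
  exists (u : 'cV[R]_N) (rho sigma : R),
    [/\ u^T *m u = 1%:M, 0 < rho, 0 < sigma + rho,
        g = sigma / (sigma + rho) &
        W *m W^T = rho%:M + sigma *: (u *m u^T) /\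
        W *m const_mx 1 = Num.sqrt (n%:R * (sigma + rho)) *: u].

Definition is_full_lift (N n : nat) (al be : 'I_n -> R) (g : R) (W : 'M[R]_(N, n)) : Prop :=
  is_lift al be g W /\ \rank W = N.

Definition rows3 n (al be t : 'I_n -> R) : 'M[R]_(3, n) :=
  \matrix_(i < 3, j < n) (if val i == 0%N then al j else if val i == 1%N then be j else t j).

End Defs.

(* Main.v *)
Require Import Defs.
From HB Require Import structures.
From mathcomp Require Import all_boot all_order all_algebra.
From mathcomp Require Import ring lra.
Import Order.TTheory GRing.Theory Num.Theory.
Local Open Scope ring_scope.
Set Implicit Arguments. Unset Strict Implicit. Unset Printing Implicit Defensive.

Section Gen.
Variables (R : rcfType) (n : nat) (al be : 'I_n -> R) (g : R).

Lemma lift_of_entries N (W : 'M[R]_(N,n)) (u : 'cV[R]_N) rho sigma :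
  (forall i j, val i = 0%N -> W i j = al j) -> (forall i j, val i = 1%N -> W i j = be j) ->
  \sum_i u i 0 ^+ 2 = 1 -> 0 < rho -> 0 < sigma + rho -> g = sigma/(sigma+rho) ->
  (forall i k, \sum_j W i j * W k j = (if val i == val k then rho else 0) + sigma * (u i 0 * u k 0)) ->
  (forall i, \sum_j W i j = Num.sqrt (n%:R * (sigma + rho)) * u i 0) -> is_lift al be g W.
Proof.
move=> h0 h1 hu hr hsr hg hWW hW1; split; first exact h0; split; first exact h1.
exists u, rho, sigma; split => //.
- apply/matrixP => i j; rewrite !ord1 !mxE -hu; apply: eq_bigr => k _.
  by rewrite !mxE expr2.
- split; apply/matrixP => i k; rewrite !mxE.
  + under eq_bigr do rewrite mxE. rewrite hWW big_ord1 !mxE mulrb addrC; congr (_ + _).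

  + rewrite ord1 -hW1; apply: eq_bigr => j _; by rewrite !mxE mulr1.
Qed.

Lemma lift_unit N (W : 'M[R]_(N,n)) : is_lift al be g W -> W *m W^T \in unitmx.
Proof.
case=> _ [_ [u [rho [sigma [hu hr hsr _ [hWW _]]]]]].
  pose B := rho^-1 *: (1%:M - (sigma / (sigma + rho)) *: (u *m u^T)).
  have PP : (u *m u^T) *m (u *m u^T) = u *m u^T by rewrite mulmxA -(mulmxA u) hu mulmx1.
  have hB : (W *m W^T) *m B = 1%:M.
    rewrite hWW /B mulmxDl mul_scalar_mx -scalemxAl.
    rewrite -!scalemxAr mulmxBr mulmx1 -scalemxAr PP.
    rewrite !scalerA scalerBr scalerBr !scalerA addrA.
    rewrite -!addrA -scalerBl -scaleNr -scalerDl.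
    have -> : - (rho / rho * (sigma / (sigma + rho))) + (sigma / rho - sigma / rho * (sigma / (sigma + rho))) = 0.
      by field; rewrite ?lt0r_neq0.
    by rewrite scale0r addr0 mulfV ?lt0r_neq0 // scale1r.
  by case: (mulmx1_unit hB).
Qed.

Lemma lift_full N (W : 'M[R]_(N,n)) : is_lift al be g W -> \rank W = N.
Proof.
move=> hl; have hU := lift_unit hl.
apply/eqP; rewrite eqn_leq rank_leq_row /=.
by rewrite -{1}(mxrank_unit hU) mxrankM_maxl.
Qed.
End Gen.
Lemma rank_col_le (F : fieldType) m1 m2 k (A : 'M[F]_(m1,k)) (B : 'M[F]_(m2,k)) :
  (\rank (col_mx A B) <= \rank A + \rank B)%N.
Proof. by rewrite -(addsmxE A B) (mxrank_adds_leqif A B). Qed.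

Lemma complete (R : rcfType) n m p (Y : 'M[R]_(m,n)) (c : R) : 0 < c ->
  (\rank Y + p <= n)%N -> exists Z : 'M[R]_(p,n), Y *m Z^T = 0 /\ Z *m Z^T = c%:M.
Proof.
move=> hc; elim: p => [|p IH] hp.
  exists 0; split; first by rewrite trmx0 mulmx0.
  by apply/matrixP => [[]].
have hp' : (\rank Y + p <= n)%N by move: hp; rewrite addnS => /ltnW.
have [Z' [hY hZ]] := IH hp'.
pose B := col_mx Y Z'.
have hB : (\rank B < n)%N.
  apply: leq_trans hp; rewrite addnS ltnS; apply: leq_trans (rank_col_le _ _) _.
  by rewrite leq_add2l rank_leq_row.
pose K := kermx B^T.
have [i hi] : exists i, row i K != 0.
  apply/existsP; rewrite -negb_forall; apply/negP => /forallP h0.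
  have : K = 0 by apply/row_matrixP => i; rewrite row0; apply/eqP/h0.
  move/eqP; rewrite -mxrank_eq0 mxrank_ker mxrank_tr subn_eq0 leqNgt hB //.
set v := row i K in hi.
have hv : B *m v^T = 0.
  by rewrite -[B]trmxK -trmx_mul /v -row_mul mulmx_ker row0 trmx0.
move: hv; rewrite /B mul_col_mx => /eqP; rewrite col_mx_eq0 => /andP [/eqP hYv /eqP hZv].
pose nv := \sum_j v 0 j ^+ 2.
have hnv : 0 < nv.
  rewrite lt_def sumr_ge0 ?andbT => [|j _]; last exact: sqr_ge0.
  apply/negP => /eqP h; apply: (negP hi); apply/eqP/rowP => j.
  have := psumr_eq0P (fun j _ => sqr_ge0 (v 0 j)) h (i:=j) isT.
  rewrite /v mxE => /eqP; rewrite sqrf_eq0 => /eqP ->; by rewrite mxE.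
pose w := (Num.sqrt c / Num.sqrt nv) *: v.
rewrite -[p.+1]add1n; exists (col_mx w Z'); split.
  by rewrite tr_col_mx mul_mx_row /w linearZ /= -scalemxAr hYv hY scaler0 row_mx0.
rewrite tr_col_mx mul_col_row hZ /w !linearZ /=.
rewrite -!scalemxAl -[v *m Z'^T]trmxK trmx_mul trmxK hZv trmx0 !scaler0.
rewrite (scalar_mx_block 1 p c); congr block_mx.
apply/matrixP => a b; rewrite !ord1 !mxE.
have E : \sum_j v 0 j * v^T j 0 = nv.
  by apply: eq_bigr => j _; rewrite !mxE expr2.
rewrite E.
rewrite mulrA -expr2 expr_div_n !sqr_sqrtr ?(ltW hc) ?(ltW hnv) //.
by rewrite divfK ?lt0r_neq0 // mulr1n.
Qed.

Section Sums.
Variables (R : rcfType) (n : nat).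
Implicit Types (x y f : 'I_n -> R).

Lemma sum_lin (c0 c1 c2 : R) x y f : \sum_j (c0 + c1 * x j + c2 * y j) * f j =
  c0 * \sum_j f j + c1 * \sum_j x j * f j + c2 * \sum_j y j * f j.
Proof. by rewrite !mulr_sumr -!big_split /=; apply: eq_bigr => j _; ring. Qed.

Lemma sum_center x y : (0 < n)%N ->
  \sum_j (x j - (\sum_k x k) / n%:R) * (y j - (\sum_k y k) / n%:R) =
  \sum_j x j * y j - (\sum_k x k) * (\sum_k y k) / n%:R.
Proof.
move=> hn; set X := \sum_k x k; set Y := \sum_k y k.
rewrite (eq_bigr (fun j => x j * y j - (Y / n%:R) * x j - (X / n%:R) * y j
   + (X / n%:R) * (Y / n%:R))); last by move=> j _; ring.
rewrite !big_split /= !sumrN -!mulr_sumr -/X -/Y sumr_const card_ord -[_ *+ n]mulr_natr.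
by field; rewrite pnatr_eq0 -lt0n.
Qed.

Lemma CS x y : (\sum_j x j * y j) ^+ 2 <= (\sum_j x j * x j) * (\sum_j y j * y j).
Proof.
set Qx := \sum_j x j * x j; set Qy := \sum_j y j * y j; set P := \sum_j x j * y j.
have hQx : 0 <= Qx by apply: sumr_ge0 => j _; rewrite -expr2 sqr_ge0.
have hQy : 0 <= Qy by apply: sumr_ge0 => j _; rewrite -expr2 sqr_ge0.
have [hx|hx] := eqVneq Qx 0.
  have hx0 : forall j, x j = 0.
    move=> j; apply/eqP; rewrite -sqrf_eq0 expr2; apply/eqP.
    exact: (psumr_eq0P (fun j _ => (ltac:(by rewrite -expr2 sqr_ge0) : 0 <= x j * x j)) hx).
  have -> : P = 0 by rewrite /P big1 // => j _; rewrite hx0 mul0r.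
  by rewrite hx expr0n /= mul0r.
have hQx' : 0 < Qx by rewrite lt_def hx hQx.
have E : \sum_j (Qx * y j - P * x j) ^+ 2 = Qx * (Qx * Qy - P ^+ 2).
  rewrite (eq_bigr (fun j => Qx ^+ 2 * (y j * y j) - (2 * Qx * P) * (x j * y j)
     + P ^+ 2 * (x j * x j))); last by move=> j _; ring.
  rewrite !big_split /= sumrN -!mulr_sumr.
  change (Qx^+2 * Qy - 2*Qx*P*P + P^+2*Qx = Qx * (Qx * Qy - P ^+ 2)); ring.
have : 0 <= Qx * (Qx * Qy - P ^+ 2) by rewrite -E; apply: sumr_ge0 => j _; exact: sqr_ge0.
by rewrite pmulr_rge0 // subr_ge0.
Qed.
End Sums.

Section Main.
Variables (R : rcfType) (n : nat) (al be : 'I_n -> R) (g : R).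
Hypotheses (hn : (3 <= n)%N) (hg : g < 1) (hnz : exists l, al l != 0 \/ be l != 0)
  (hyp : cscale (g / n%:R) (cmul (csum al be) (csum al be)) = csumsq al be).

Definition Sa := \sum_l al l.
Definition Sb := \sum_l be l.
Definition Qa := \sum_l al l * al l.
Definition Qb := \sum_l be l * be l.
Definition Pab := \sum_l al l * be l.

Definition rho0 := 1/2 * (\sum_l cnorm2 (zof al be l)) - g / (2 * n%:R) * cnorm2 (csum al be).
Definition sigma0 := g * rho0 / (1 - g).
Definition s0 := Num.sqrt (n%:R * (sigma0 + rho0)).
Definition u10 := (\sum_l al l) / s0.
Definition u20 := (\sum_l be l) / s0.
Definition u30 := Num.sqrt (1 - u10 ^+ 2 - u20 ^+ 2).

Lemma nR : 0 < n%:R :> R.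
Proof. by rewrite ltr0n; apply: leq_trans hn. Qed.
Lemma nR0 : n%:R != 0 :> R.
Proof. by rewrite lt0r_neq0 // nR. Qed.
Lemma hg1 : 1 - g != 0.
Proof. by rewrite subr_eq0 eq_sym lt_eqF. Qed.

Lemma hyp1 : Qa - Qb = g / n%:R * (Sa * Sa - Sb * Sb).
Proof.
have := congr1 fst hyp; rewrite /= => ->.
by rewrite /Qa /Qb -sumrB.
Qed.

Lemma hyp2 : Pab = g / n%:R * (Sa * Sb).
Proof.
have := congr1 snd hyp; rewrite /= => h.
have : 2 * Pab = 2 * (g / n%:R * (Sa * Sb)).
  have -> : 2 * (g / n%:R * (Sa * Sb)) = g / n%:R * (Sa * Sb + Sb * Sa) by ring.
  rewrite h /Pab mulr_sumr; apply: eq_bigr => l _ /=; ring.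
by move/(mulfI (lt0r_neq0 (ltr0Sn R 1))).
Qed.

Lemma rho_eq : rho0 = (Qa + Qb) / 2 - g / (2 * n%:R) * (Sa * Sa + Sb * Sb).
Proof.
rewrite /rho0 /cnorm2 /= -/Sa -/Sb !expr2; congr (_ - _ * _).
by rewrite big_split /= -/Qa -/Qb mul1r mulrC.
Qed.

Lemma Qa_ge0 : 0 <= Qa.
Proof. by apply: sumr_ge0 => j _; rewrite -expr2 sqr_ge0. Qed.
Lemma Qb_ge0 : 0 <= Qb.
Proof. by apply: sumr_ge0 => j _; rewrite -expr2 sqr_ge0. Qed.

Lemma T_gt0 : 0 < Qa + Qb.
Proof.
rewrite lt_def addr_ge0 ?Qa_ge0 ?Qb_ge0 // andbT.
apply/negP => /eqP h.
have h' : \sum_l (al l * al l + be l * be l) = 0 by rewrite big_split.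
case: hnz => l hl.
have := psumr_eq0P (fun j _ => (ltac:(by rewrite addr_ge0 // -expr2 sqr_ge0) : 0 <= al j * al j + be j * be j)) h' (i:=l) isT.
move/eqP; rewrite paddr_eq0 -?expr2 ?sqr_ge0 // !sqrf_eq0.
by case: hl => /negPf ->; rewrite ?andbF.
Qed.

Lemma key : (2 - g) * (Sa * Sa + Sb * Sb) <= n%:R * (Qa + Qb).
Proof.
have hn0 : (0 < n)%N by apply: leq_trans hn.
have hqa := sum_center al al hn0.
have hqb := sum_center be be hn0.
have hp := sum_center al be hn0.
have hcs := CS (fun j => al j - (\sum_k al k) / n%:R) (fun j => be j - (\sum_k be k) / n%:R).
rewrite /= hqa hqb hp -/Sa -/Sb -/Qa -/Qb -/Pab in hcs.
set qa := Qa - Sa * Sa / n%:R in hcs *.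
set qb := Qb - Sb * Sb / n%:R in hcs *.
set p := Pab - Sa * Sb / n%:R in hcs *.
have hqa0 : 0 <= qa.
  rewrite /qa -hqa; apply: sumr_ge0 => j _; by rewrite -expr2 sqr_ge0.
have hqb0 : 0 <= qb.
  rewrite /qb -hqb; apply: sumr_ge0 => j _; by rewrite -expr2 sqr_ge0.
have eqd : qa - qb = (g - 1) / n%:R * (Sa * Sa - Sb * Sb).
  have h1 := hyp1; rewrite /qa /qb.
  have -> : Qa - Sa * Sa / n%:R - (Qb - Sb * Sb / n%:R) = (Qa - Qb) - (Sa * Sa - Sb * Sb) / n%:R by ring.
  rewrite h1; field; exact: nR0.
have eqp : p = (g - 1) / n%:R * (Sa * Sb).
  rewrite /p hyp2; field; exact: nR0.
set X := Sa * Sa + Sb * Sb.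
have hX : 0 <= X by rewrite /X -!expr2 addr_ge0 ?sqr_ge0.
set M := (1 - g) / n%:R * X.
have hM : 0 <= M.
  by rewrite /M mulr_ge0 // divr_ge0 ?subr_ge0 ?ltW ?nR.
have hML : M ^+ 2 <= (qa + qb) ^+ 2.
  rewrite -subr_ge0.
  have -> : (qa + qb) ^+ 2 - M ^+ 2 = 4 * (qa * qb - p ^+ 2) + ((qa - qb) ^+ 2 + 4 * p ^+ 2 - M ^+ 2) by ring.
  have -> : (qa - qb) ^+ 2 + 4 * p ^+ 2 - M ^+ 2 = 0.
    rewrite eqd eqp /M /X; field; exact: nR0.
  by rewrite addr0 mulr_ge0 // subr_ge0.
have hML' : M <= qa + qb.
  by move: hML; rewrite ler_sqr // nnegrE; apply: addr_ge0.
have : n%:R * M <= n%:R * (qa + qb) by rewrite ler_wpM2l // (ltW nR).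
have -> : n%:R * M = (1 - g) * X by rewrite /M; field; exact: nR0.
have -> : n%:R * (qa + qb) = n%:R * (Qa + Qb) - X by rewrite /qa /qb /X; field; exact: nR0.
move=> h; lra.
Qed.


Lemma X_ge0 : 0 <= Sa * Sa + Sb * Sb.
Proof. by rewrite -!expr2 addr_ge0 ?sqr_ge0. Qed.

Lemma rho_pos : 0 < rho0.
Proof.
rewrite rho_eq.
have hT := T_gt0; have hk := key; have hX := X_ge0; have hnR := nR.
set X := Sa * Sa + Sb * Sb in hk hX *; set T := Qa + Qb in hT hk *.
have -> : T / 2 - g / (2 * n%:R) * X = (T - g * (X / n%:R)) / 2 by field; exact: nR0.
rewrite divr_gt0 // subr_gt0.
set Y := X / n%:R.
have hY : 0 <= Y by rewrite divr_ge0 // ltW.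
have hYT : Y <= T.
  rewrite ler_pdivrMr // mulrC; apply: le_trans hk.
  rewrite ler_peMl //; have := hg; lra.
have hg' := hg.
case: (lerP g 0) => hg0.
  have : g * Y <= 0 by rewrite mulr_le0_ge0.
  lra.
have h1 : g * Y <= g * T by rewrite ler_wpM2l // ltW.
have h2 : 0 < (1 - g) * T by rewrite mulr_gt0 // subr_gt0.
lra.
Qed.

Lemma sr_eq : sigma0 + rho0 = rho0 / (1 - g).
Proof. by rewrite /sigma0; field; exact: hg1. Qed.

Lemma sr_pos : 0 < sigma0 + rho0.
Proof. by rewrite sr_eq divr_gt0 ?rho_pos // subr_gt0. Qed.

Lemma s_pos : 0 < s0.
Proof. by rewrite /s0 sqrtr_gt0 mulr_gt0 ?nR ?sr_pos. Qed.

Lemma s2 : s0 ^+ 2 = n%:R * (sigma0 + rho0).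
Proof. by rewrite /s0 sqr_sqrtr // mulr_ge0 ?(ltW nR) ?(ltW sr_pos). Qed.

Lemma Sa_u : Sa = s0 * u10.
Proof. by rewrite /u10 -/Sa mulrC divfK // lt0r_neq0 // s_pos. Qed.
Lemma Sb_u : Sb = s0 * u20.
Proof. by rewrite /u20 -/Sb mulrC divfK // lt0r_neq0 // s_pos. Qed.

Lemma g_eq : g = sigma0 / (sigma0 + rho0).
Proof. by rewrite sr_eq /sigma0; field; rewrite hg1 lt0r_neq0 // rho_pos. Qed.

Lemma sig_u (x : R) : sigma0 * (x / s0) ^+ 2 = g * x ^+ 2 / n%:R.
Proof.
rewrite expr_div_n s2 {1}g_eq; field.
by rewrite nR0 /=; exact: lt0r_neq0 sr_pos.
Qed.

Lemma Qa_u : Qa = rho0 + sigma0 * u10 ^+ 2.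
Proof.
rewrite /u10 sig_u -/Sa rho_eq.
have h1 := hyp1.
apply/eqP; rewrite -subr_eq0; apply/eqP.
transitivity ((Qa - Qb) / 2 - g / n%:R * (Sa * Sa - Sb * Sb) / 2).
  by field; exact: nR0.
by rewrite h1 subrr.
Qed.

Lemma Qb_u : Qb = rho0 + sigma0 * u20 ^+ 2.
Proof.
rewrite /u20 sig_u -/Sb rho_eq.
have h1 := hyp1.
apply/eqP; rewrite -subr_eq0; apply/eqP.
transitivity (- (Qa - Qb) / 2 + g / n%:R * (Sa * Sa - Sb * Sb) / 2).
  by field; exact: nR0.
by rewrite h1 mulNr addNr.
Qed.

Ltac nz := rewrite ?nR0 ?(lt0r_neq0 sr_pos) ?(lt0r_neq0 s_pos) ?hg1 ?(lt0r_neq0 rho_pos).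

Lemma P_u : Pab = sigma0 * (u10 * u20).
Proof.
rewrite hyp2 /u10 /u20 -/Sa -/Sb.
have -> : sigma0 * (Sa / s0 * (Sb / s0)) = sigma0 * ((Sa * Sb) / s0 ^+ 2) by field; nz.
by rewrite s2 {1}g_eq; field; nz.
Qed.

Lemma sumcn : \sum_l cnorm2 (zof al be l) = Qa + Qb.
Proof. by rewrite /cnorm2 /= -big_split; apply: eq_bigr => l _; rewrite !expr2. Qed.
Lemma cncs : cnorm2 (csum al be) = Sa * Sa + Sb * Sb.
Proof. by rewrite /cnorm2 /= !expr2. Qed.

Lemma s2_eq : s0 ^+ 2 = (n%:R * (Qa + Qb) - g * (Sa * Sa + Sb * Sb)) / (2 * (1 - g)).
Proof. by rewrite s2 sr_eq rho_eq; field; nz. Qed.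

Lemma uu_s : u10 ^+ 2 + u20 ^+ 2 = (Sa * Sa + Sb * Sb) / s0 ^+ 2.
Proof. by rewrite /u10 /u20 !expr_div_n -mulrDl !expr2. Qed.

Lemma uu_le : u10 ^+ 2 + u20 ^+ 2 <= 1.
Proof.
rewrite uu_s ler_pdivrMr ?exprn_gt0 ?s_pos // mul1r s2_eq ler_pdivlMr; last first.
  by rewrite mulr_gt0 // subr_gt0.
have hk := key; have hg' := hg.
set X := Sa * Sa + Sb * Sb in hk *.
lra.
Qed.

Lemma uu_lt : n%:R * (\sum_l cnorm2 (zof al be l)) + (g - 2) * cnorm2 (csum al be) != 0 ->
  u10 ^+ 2 + u20 ^+ 2 < 1.
Proof.
rewrite sumcn cncs => hnd.
rewrite uu_s ltr_pdivrMr ?exprn_gt0 ?s_pos // mul1r s2_eq ltr_pdivlMr; last first.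
  by rewrite mulr_gt0 // subr_gt0.
have hk := key; have hg' := hg.
set X := Sa * Sa + Sb * Sb in hk hnd *.
have hk' : (2 - g) * X < n%:R * (Qa + Qb).
  rewrite lt_def hk andbT; apply: contra hnd => /eqP h.
  by rewrite h; apply/eqP; ring.
lra.
Qed.

Lemma u3_sq : u30 ^+ 2 = 1 - u10 ^+ 2 - u20 ^+ 2.
Proof. by rewrite /u30 sqr_sqrtr // -addrA -opprD subr_ge0 uu_le. Qed.

Definition rowf (t : 'I_n -> R) (i : 'I_3) (j : 'I_n) : R :=
  if val i == 0%N then al j else if val i == 1%N then be j else t j.
Definition uv (x : R) (i : 'I_3) : R :=
  if val i == 0%N then u10 else if val i == 1%N then u20 else x.

Section T.
Variables (t : 'I_n -> R) (x : R).
Hypotheses (hx : x ^+ 2 = 1 - u10 ^+ 2 - u20 ^+ 2)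
  (ht1 : \sum_j t j = s0 * x)
  (hat : \sum_j al j * t j = sigma0 * (u10 * x))
  (hbt : \sum_j be j * t j = sigma0 * (u20 * x))
  (htt : \sum_j t j * t j = rho0 + sigma0 * x ^+ 2).

Lemma swap_sum (f h : 'I_n -> R) : \sum_j f j * h j = \sum_j h j * f j.
Proof. by apply: eq_bigr => j _; rewrite mulrC. Qed.

Lemma gram3 (i k : 'I_3) : \sum_j rowf t i j * rowf t k j =
  (if val i == val k then rho0 else 0) + sigma0 * (uv x i * uv x k).
Proof.
have fQa : \sum_j al j * al j = rho0 + sigma0 * (u10 * u10) by rewrite -expr2 -Qa_u.
have fQb : \sum_j be j * be j = rho0 + sigma0 * (u20 * u20) by rewrite -expr2 -Qb_u.
have fP : \sum_j al j * be j = sigma0 * (u10 * u20) by rewrite -P_u.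
have fP' : \sum_j be j * al j = sigma0 * (u20 * u10) by rewrite swap_sum fP (mulrC u20).
have fta : \sum_j t j * al j = sigma0 * (x * u10) by rewrite swap_sum hat (mulrC x).
have ftb : \sum_j t j * be j = sigma0 * (x * u20) by rewrite swap_sum hbt (mulrC x).
have ftt : \sum_j t j * t j = rho0 + sigma0 * (x * x) by rewrite htt expr2.
case: i => [[|[|[|//]]] hi]; case: k => [[|[|[|//]]] hk];
  by rewrite /rowf /uv /= ?add0r.
Qed.

Lemma sum3 (i : 'I_3) : \sum_j rowf t i j = s0 * uv x i.
Proof.
case: i => [[|[|[|//]]] hi]; rewrite /rowf /uv /= //.
  by rewrite -Sa_u.
by rewrite -Sb_u.
Qed.

Lemma uvsq : \sum_i uv x i ^+ 2 = 1.
Proof. by rewrite !big_ord_recr big_ord0 /= /uv /= add0r hx; ring. Qed.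

Lemma lift3 : is_lift al be g (rows3 al be t).
Proof.
apply: (lift_of_entries (u := \col_i uv x i)) (rho_pos) (sr_pos) (g_eq) _ _.
- by move=> i j hi; rewrite mxE hi.
- by move=> i j hi; rewrite mxE hi.
- by rewrite -uvsq; apply: eq_bigr => i _; rewrite mxE.
- move=> i k; rewrite !mxE -gram3; apply: eq_bigr => j _; by rewrite !mxE.
- move=> i; rewrite mxE -sum3; apply: eq_bigr => j _; by rewrite !mxE.
Qed.

Lemma assemble p (Z : 'M[R]_(p,n)) :
  (forall k, \sum_j Z k j * al j = 0) -> (forall k, \sum_j Z k j * be j = 0) ->
  (forall k, \sum_j Z k j * t j = 0) -> (forall k, \sum_j Z k j = 0) ->
  (forall k k', \sum_j Z k j * Z k' j = if val k == val k' then rho0 else 0) ->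
  exists W : 'M[R]_(3 + p, n), is_lift al be g W.
Proof.
move=> hza hzb hzt hz1 hzz.
pose f (i : 'I_(3+p)) (j : 'I_n) := match split i with inl i3 => rowf t i3 j | inr k => Z k j end.
pose uf (i : 'I_(3+p)) := match split i with inl i3 => uv x i3 | inr _ => 0 end.
have hzr : forall (i3 : 'I_3) k, \sum_j rowf t i3 j * Z k j = 0.
  move=> i3 k; rewrite swap_sum; case: i3 => [[|[|[|//]]] hi]; rewrite /rowf /=.
  - exact: hza.
  - exact: hzb.
  - exact: hzt.
have hne : forall (i3 : 'I_3) (k : 'I_p), (val i3 == 3 + val k)%N = false.
  move=> i3 k; apply/negbTE; rewrite neq_ltn (leq_trans (ltn_ord i3)) ?leq_addr //.
exists (\matrix_(i,j) f i j).
apply: (lift_of_entries (u := \col_i uf i) _ _ _ rho_pos sr_pos g_eq).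
- move=> i j hi; rewrite mxE /f; case: (splitP i) => [i3 e|k e].
    have h3 : val i3 = 0%N by move: hi; rewrite /= e.
    by rewrite /rowf h3.
  by move: hi; rewrite /= e.
- move=> i j hi; rewrite mxE /f; case: (splitP i) => [i3 e|k e].
    have h3 : val i3 = 1%N by move: hi; rewrite /= e.
    by rewrite /rowf h3.
  by move: hi; rewrite /= e.
- have sl : forall i : 'I_3, split (lshift p i) = inl i := fun i => unsplitK (inl _ i).
  have sr : forall k : 'I_p, split (rshift 3 k) = inr k := fun k => unsplitK (inr _ k).
  rewrite big_split_ord /=.
  rewrite (eq_bigr (fun i => uv x i ^+ 2)); last by move=> i _; rewrite mxE /uf sl.
  rewrite uvsq big1 ?addr0 // => k _; by rewrite mxE /uf sr expr0n.
- move=> i k; under eq_bigr do rewrite !mxE.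
  rewrite !mxE /f /uf; case: (splitP i) => [i3 ei|ki ei]; case: (splitP k) => [k3 ek|kk ek].
  + by rewrite /= ei ek gram3.
  + by rewrite /= ei ek hne !mulr0 add0r hzr.
  + by rewrite /= ei ek eq_sym hne mul0r mulr0 add0r swap_sum hzr.
  + by rewrite /= ei ek eqn_add2l hzz mul0r mulr0 addr0.
- move=> i; under eq_bigr do rewrite mxE.
  rewrite mxE /f /uf; case: (splitP i) => [i3 _|k _].
    exact: sum3.
  by rewrite hz1 mulr0.
Qed.

End T.
Lemma sum_lin1 (c0 c1 c2 : R) (x y : 'I_n -> R) : \sum_j (c0 + c1 * x j + c2 * y j) =
  c0 * n%:R + c1 * \sum_j x j + c2 * \sum_j y j.
Proof.
rewrite !big_split /= -!mulr_sumr sumr_const card_ord; congr (_ + _ + _).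
by rewrite mulr_natr.
Qed.

Definition c1p := - u10 / u30.
Definition c2p := - u20 / u30.
Definition c0p := s0 * u30 / n%:R + s0 * (u10 ^+ 2 + u20 ^+ 2) / (n%:R * u30).
Definition tpos j := c0p + c1p * al j + c2p * be j.

Lemma tpos_props : 0 < u30 ->
  [/\ \sum_j tpos j = s0 * u30,
      \sum_j al j * tpos j = sigma0 * (u10 * u30),
      \sum_j be j * tpos j = sigma0 * (u20 * u30) &
      \sum_j tpos j * tpos j = rho0 + sigma0 * u30 ^+ 2].
Proof.
move=> hu3; have hu30 : u30 != 0 by rewrite lt0r_neq0.
have h2 := s2; have h3 := u3_sq.
have e1 : \sum_j tpos j = s0 * u30.
  rewrite /tpos sum_lin1 -/Sa -/Sb Sa_u Sb_u /c0p /c1p /c2p.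
  by field: h2 h3; rewrite nR0 hu30.
have ea : \sum_j al j * tpos j = sigma0 * (u10 * u30).
  rewrite swap_sum /tpos sum_lin -/Sa -/Qa (swap_sum be) -/Pab Sa_u Qa_u P_u /c0p /c1p /c2p.
  by field: h2 h3; rewrite nR0 hu30.
have eb : \sum_j be j * tpos j = sigma0 * (u20 * u30).
  rewrite swap_sum /tpos sum_lin -/Sb -/Qb -/Pab Sb_u Qb_u P_u /c0p /c1p /c2p.
  by field: h2 h3; rewrite nR0 hu30.
split => //.
rewrite {1}/tpos sum_lin e1 ea eb /c0p /c1p /c2p.
by field: h2 h3; rewrite nR0 hu30.
Qed.

Definition Amat := rows3 al be (fun _ => 1).

Lemma A_orth p (Z : 'M[R]_(p,n)) : Amat *m Z^T = 0 ->
  [/\ forall k, \sum_j Z k j * al j = 0, forall k, \sum_j Z k j * be j = 0 &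
      forall k, \sum_j Z k j = 0].
Proof.
move=> h.
have e : forall i k, \sum_j Amat i j * Z k j = 0.
  move=> i k; transitivity ((Amat *m Z^T) i k); last by rewrite h mxE.
  by rewrite mxE; apply: eq_bigr => j _; rewrite [Z^T _ _]mxE.
split => k.
- have := e (@Ordinal 3 0 isT) k; rewrite swap_sum; under eq_bigr do rewrite mxE; by [].
- have := e (@Ordinal 3 1 isT) k; rewrite swap_sum; under eq_bigr do rewrite mxE; by [].
- have := e (@Ordinal 3 2 isT) k; rewrite swap_sum; under eq_bigr do rewrite mxE /= mulr1; by [].
Qed.

Lemma ZZ_orth p (Z : 'M[R]_(p,n)) : Z *m Z^T = rho0%:M ->
  forall k k', \sum_j Z k j * Z k' j = if val k == val k' then rho0 else 0.
Proof.
move=> h k k'; transitivity ((Z *m Z^T) k k'); last by rewrite h mxE mulrb.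
by rewrite mxE; apply: eq_bigr => j _; rewrite mxE.
Qed.

Lemma rankA2 : u30 = 0 -> (\rank Amat <= 2)%N.
Proof.
move=> h0.
have hu : u10 ^+ 2 + u20 ^+ 2 = 1.
  have := u3_sq; rewrite h0 expr0n /= => e; lra.
pose c := - (u10 * Sa + u20 * Sb) / n%:R.
pose d j := c + u10 * al j + u20 * be j.
have h2 := s2.
have hu' : u10 ^+ 2 = 1 - u20 ^+ 2 by rewrite -hu; ring.
have hd1 : \sum_j d j = 0.
  by rewrite /d sum_lin1 -/Sa -/Sb /c; field; rewrite nR0.
have hda : \sum_j d j * al j = 0.
  rewrite /d sum_lin -/Sa -/Qa (swap_sum be) -/Pab /c Sa_u Sb_u Qa_u P_u.
  by field: h2 hu'; rewrite nR0.
have hdb : \sum_j d j * be j = 0.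
  rewrite /d sum_lin -/Sb -/Qb -/Pab /c Sa_u Sb_u Qb_u P_u.
  by field: h2 hu'; rewrite nR0.
have hdd : \sum_j d j * d j = 0.
  rewrite {1}/d sum_lin hd1 (swap_sum al) hda (swap_sum be) hdb; ring.
have hd0 : forall j, d j = 0.
  move=> j; apply/eqP; rewrite -sqrf_eq0 expr2; apply/eqP.
  exact: (psumr_eq0P (fun j _ => (ltac:(by rewrite -expr2 sqr_ge0) : 0 <= d j * d j)) hdd).
pose y : 'rV[R]_3 := \row_i (if val i == 0%N then u10 else if val i == 1%N then u20 else c).
have hy : y *m Amat = 0.
  apply/rowP => j; rewrite !mxE !big_ord_recr big_ord0 /= !mxE /= add0r -(hd0 j) /d.
  by ring.
have hy0 : y != 0.
  apply/eqP => hy0.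
  have e0 := congr1 (fun M : 'rV[R]_3 => M 0 (@Ordinal 3 0 isT)) hy0.
  have e1 := congr1 (fun M : 'rV[R]_3 => M 0 (@Ordinal 3 1 isT)) hy0.
  rewrite /= !mxE /= in e0 e1.
  by move: hu; rewrite e0 e1 expr0n /= add0r => /eqP; rewrite eq_sym oner_eq0.
rewrite leqNgt; apply/negP => h3.
have rf : row_free Amat by rewrite /row_free eqn_leq rank_leq_row h3.
by move: (mulmx_free_eq0 y rf); rewrite hy eqxx (negbTE hy0).
Qed.

Lemma exists_lift N : (3 <= N <= n)%N -> exists W : 'M[R]_(N,n), is_full_lift al be g W.
Proof.
case/andP => hN1 hN2.
suff [W hW] : exists W : 'M[R]_(3 + (N - 3), n), is_lift al be g W.
  move: W hW; rewrite subnKC // => W hW; exists W; split => //; exact: lift_full hW.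
have hr := rho_pos.
have [hu3|hu3] : 0 < u30 \/ u30 = 0.
  have : 0 <= u30 by rewrite sqrtr_ge0.
  by rewrite le_eqVlt => /orP [/eqP <-|]; [right|left].
- case: (tpos_props hu3) => e1 ea eb ett.
  have hp : (\rank Amat + (N - 3) <= n)%N.
    apply: leq_trans _ hN2; rewrite -{2}(subnKC hN1) leq_add2r; exact: rank_leq_row.
  have [Z [hAZ hZZ]] := complete hr hp.
  case: (A_orth hAZ) => hza hzb hz1.
  apply: (assemble u3_sq e1 ea eb ett hza hzb _ hz1 (ZZ_orth hZZ)).
  move=> k; rewrite swap_sum /tpos sum_lin (swap_sum al) (swap_sum be) hza hzb.
  by rewrite (eq_bigr (fun j => Z k j)) ?hz1 ?mulr0 ?addr0 // => j _; rewrite mulr1.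
- have hp1 : (\rank Amat + 1 <= n)%N.
    by rewrite addn1; apply: leq_ltn_trans (rankA2 hu3) _.
  have [T [hAT hTT]] := complete hr hp1.
  case: (A_orth hAT) => hta htb ht1.
  have htt := ZZ_orth hTT 0 0.
  pose t j := T 0 j.
  have hp : (\rank (col_mx Amat T) + (N - 3) <= n)%N.
    apply: leq_trans _ hN2; rewrite -{2}(subnKC hN1) leq_add2r.
    apply: leq_trans (rank_col_le _ _) _.
    by rewrite (leq_add (rankA2 hu3) (rank_leq_row T)).
  have [Z [hAZ hZZ]] := complete hr hp.
  move: hAZ; rewrite mul_col_mx => /eqP; rewrite col_mx_eq0 => /andP [/eqP hAZ /eqP hTZ].
  case: (A_orth hAZ) => hza hzb hz1.
  have hx : 0 ^+ 2 = 1 - u10 ^+ 2 - u20 ^+ 2 :> R by rewrite -u3_sq hu3.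
  apply: (@assemble t 0 hx _ _ _ _ _ Z hza hzb _ hz1 (ZZ_orth hZZ)).
  + by rewrite mulr0 ht1.
  + by rewrite !mulr0 swap_sum hta.
  + by rewrite !mulr0 swap_sum htb.
  + by rewrite expr0n /= mulr0 addr0 htt.
  + move=> k; rewrite swap_sum; transitivity ((T *m Z^T) 0 k); last by rewrite hTZ mxE.
    by rewrite mxE; apply: eq_bigr => j _; rewrite [Z^T _ _]mxE.
Qed.

Section Nondeg.
Hypothesis hnd : n%:R * (\sum_l cnorm2 (zof al be l)) + (g - 2) * cnorm2 (csum al be) != 0.

Lemma u3_pos : 0 < u30.
Proof. rewrite /u30 sqrtr_gt0; have := uu_lt hnd; lra. Qed.

Lemma c0p_pos : 0 < c0p.
Proof.
have hu := u3_pos; have hs := s_pos; have hnR := nR.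
rewrite /c0p.
have h1 : 0 < s0 * u30 / n%:R by apply: divr_gt0 => //; apply: mulr_gt0.
have h2 : 0 <= s0 * (u10 ^+ 2 + u20 ^+ 2) / (n%:R * u30).
  apply: divr_ge0; apply: mulr_ge0; rewrite ?(ltW hs) ?(ltW hnR) ?(ltW hu) //.
  by apply: addr_ge0; apply: sqr_ge0.
lra.
Qed.

Lemma lift_tpos : is_lift al be g (rows3 al be tpos).
Proof.
case: (tpos_props u3_pos) => e1 ea eb ett.
exact: (lift3 u3_sq e1 ea eb ett).
Qed.

Definition ycol : 'cV[R]_3 := \col_i (if val i == 0%N then c1p else if val i == 1%N then c2p else c0p).

Lemma tcol_eq : \col_j tpos j = Amat^T *m ycol.
Proof.
apply/colP => j; rewrite !mxE !big_ord_recr big_ord0 /= !mxE /= add0r /tpos.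
by ring.
Qed.

Lemma AAt_unit : Amat *m Amat^T \in unitmx.
Proof.
have hU := lift_unit lift_tpos.
pose Mm : 'M[R]_3 := \matrix_(i, k) (if val i == 2%N then ycol k 0 else (val i == val k)%:R).
have hWM : rows3 al be tpos = Mm *m Amat.
  apply/matrixP => i j; rewrite !mxE !big_ord_recr big_ord0 /= !mxE /= add0r.
  case: i => [[|[|[|//]]] hi] /=; rewrite ?mul1r ?mul0r ?addr0 ?add0r //.
  by rewrite /tpos; ring.
move: hU; rewrite hWM.
have -> : Mm *m Amat *m (Mm *m Amat)^T = Mm *m (Amat *m Amat^T) *m Mm^T.
  by rewrite trmx_mul !mulmxA.
rewrite !unitmxE !unitfE !det_mulmx !mulf_eq0 !negb_or.
by case/andP => /andP [_ ->].
Qed.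

Lemma rankA3 : \rank Amat = 3%N.
Proof.
apply/eqP; rewrite eqn_leq rank_leq_row /=.
by rewrite -{1}(mxrank_unit AAt_unit) mxrankM_maxl.
Qed.

Definition bvec : 'cV[R]_3 := u30 *: (\col_(i < 3)
        (if val i == 0%N then sigma0 * u10 else if val i == 1%N then sigma0 * u20 else s0)).

Lemma Tmat_eq j : (Amat^T *m invmx (Amat *m Amat^T) *m bvec) j 0 = tpos j.
Proof.
case: (tpos_props u3_pos) => e1 ea eb ett.
have hb : bvec = Amat *m \col_j tpos j.
  apply/colP => i; rewrite !mxE.
  under eq_bigr do rewrite !mxE.
  case: i => [[|[|[|//]]] hi] /=.
  - by rewrite ea mulrA mulrC mulrA.
  - by rewrite eb mulrA mulrC mulrA.
  - under eq_bigr do rewrite mul1r.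
    by rewrite e1 mulrC.
rewrite hb tcol_eq (mulmxA Amat) -mulmxA (mulKmx AAt_unit) -tcol_eq mxE.
by [].
Qed.

Lemma uniq_t (e : R) (t' : 'I_n -> R) : e ^+ 2 = 1 ->
  \sum_j t' j = s0 * (e * u30) ->
  \sum_j al j * t' j = sigma0 * (u10 * (e * u30)) ->
  \sum_j be j * t' j = sigma0 * (u20 * (e * u30)) ->
  \sum_j t' j * t' j = rho0 + sigma0 * (e * u30) ^+ 2 ->
  forall j, t' j = e * tpos j.
Proof.
move=> he h1 ha hb htt.
case: (tpos_props u3_pos) => e1 ea eb ett.
have E2 : \sum_j tpos j * tpos j = c0p * \sum_j tpos j + c1p * \sum_j al j * tpos j
   + c2p * \sum_j be j * tpos j := sum_lin _ _ _ _ _ _.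
have E1 : \sum_j tpos j * t' j = c0p * \sum_j t' j + c1p * \sum_j al j * t' j
   + c2p * \sum_j be j * t' j := sum_lin _ _ _ _ _ _.
rewrite ett e1 ea eb in E2; rewrite h1 ha hb in E1.
have E2' : rho0 = c0p * (s0 * u30) + c1p * (sigma0 * (u10 * u30)) +
    c2p * (sigma0 * (u20 * u30)) - sigma0 * u30 ^+ 2 by rewrite -E2; ring.
pose d j := t' j - e * tpos j.
have hdd : \sum_j d j * d j = 0.
  rewrite (eq_bigr (fun j => t' j * t' j - (2 * e) * (tpos j * t' j) + e ^+ 2 * (tpos j * tpos j)));
    last by move=> j _; rewrite /d; ring.
  rewrite !big_split /= sumrN -!mulr_sumr htt E1 ett.
  by ring: he E2'.
move=> j; apply/eqP; rewrite -subr_eq0; apply/eqP.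
have := psumr_eq0P (fun j _ => (ltac:(by rewrite -expr2 sqr_ge0) : 0 <= d j * d j)) hdd (i:=j) isT.
by move/eqP; rewrite mulf_eq0 orbb => /eqP.
Qed.

Definition o0 := @Ordinal 3 0 isT.
Definition o1 := @Ordinal 3 1 isT.
Definition o2 := @Ordinal 3 2 isT.
Lemma o01 : (o0 == o1) = false. Proof. by []. Qed.
Lemma o02 : (o0 == o2) = false. Proof. by []. Qed.
Lemma o12 : (o1 == o2) = false. Proof. by []. Qed.

Lemma sum_ord3 (F : 'I_3 -> R) : \sum_i F i = F o0 + F o1 + F o2.
Proof.
rewrite !big_ord_recr big_ord0 /= add0r.
by congr (F _ + F _ + F _); apply: val_inj.
Qed.

Lemma charac (W : 'M[R]_(3, n)) : is_lift al be g W <->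
  exists2 e : R, (e = 1 \/ e = -1) &
    W = rows3 al be (fun j => (e *: (Amat^T *m invmx (Amat *m Amat^T) *m bvec)) j 0).
Proof.
have hR : forall e, rows3 al be (fun j => (e *: (Amat^T *m invmx (Amat *m Amat^T) *m bvec)) j 0)
    = rows3 al be (fun j => e * tpos j).
  move=> e; apply/matrixP => i j; rewrite [LHS]mxE [RHS]mxE.
  by case: ifP => // _; case: ifP => // _; rewrite [LHS]mxE Tmat_eq.
have hu3 := u3_pos.
case: (tpos_props hu3) => e1 ea eb ett.
split; last first.
  case=> e he ->; rewrite hR.
  have he2 : e ^+ 2 = 1 by case: he => ->; rewrite ?expr1n ?sqrrN ?expr1n.
  apply: (lift3 (x := e * u30)).
  - by rewrite exprMn he2 mul1r u3_sq.
  - by rewrite -mulr_sumr e1; ring.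
  - rewrite (eq_bigr (fun j => e * (al j * tpos j))); last by move=> j _; ring.
    by rewrite -mulr_sumr ea; ring.
  - rewrite (eq_bigr (fun j => e * (be j * tpos j))); last by move=> j _; ring.
    by rewrite -mulr_sumr eb; ring.
  - rewrite (eq_bigr (fun j => e ^+ 2 * (tpos j * tpos j))); last by move=> j _; ring.
    by rewrite -mulr_sumr ett; ring: he2.
case=> h0 [h1 [u [rho' [sigma' [hu hr hsr hg' [hWW hW1]]]]]].
have ent : forall i k, \sum_j W i j * W k j = (if i == k then rho' else 0) + sigma' * (u i 0 * u k 0).
  move=> i k; transitivity ((W *m W^T) i k).
    by rewrite mxE; apply: eq_bigr => j _; rewrite [W^T _ _]mxE.
  by rewrite hWW !mxE big_ord1 !mxE mulrb.
set s' := Num.sqrt (n%:R * (sigma' + rho')) in hW1.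
have sm : forall i, \sum_j W i j = s' * u i 0.
  move=> i; transitivity ((W *m (const_mx 1 : 'cV[R]_n)) i 0).
    by rewrite mxE; apply: eq_bigr => j _; rewrite mxE mulr1.
  by rewrite hW1 mxE.
have usum : u o0 0 ^+ 2 + u o1 0 ^+ 2 + u o2 0 ^+ 2 = 1.
  have := congr1 (fun M : 'M[R]_1 => M 0 0) hu; rewrite !mxE sum_ord3 /= !mxE -!expr2.
  by [].
have W0 : forall j, W o0 j = al j by move=> j; apply: h0.
have W1 : forall j, W o1 j = be j by move=> j; apply: h1.
have eQa : Qa = rho' + sigma' * (u o0 0 * u o0 0).
  by have := ent o0 o0; rewrite eqxx => <-; apply: eq_bigr => j _; rewrite W0.
have eQb : Qb = rho' + sigma' * (u o1 0 * u o1 0).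
  by have := ent o1 o1; rewrite eqxx => <-; apply: eq_bigr => j _; rewrite W1.
have eP : Pab = sigma' * (u o0 0 * u o1 0).
  by have := ent o0 o1; rewrite o01 add0r => <-; apply: eq_bigr => j _; rewrite W0 W1.
have eSa : Sa = s' * u o0 0.
  by rewrite -sm; apply: eq_bigr => j _; rewrite W0.
have eSb : Sb = s' * u o1 0.
  by rewrite -sm; apply: eq_bigr => j _; rewrite W1.
have hs'2 : s' ^+ 2 = n%:R * (sigma' + rho').
  by rewrite /s' sqr_sqrtr // mulr_ge0 // ?(ltW nR) ?(ltW hsr).
have hrho : rho' = rho0.
  rewrite rho_eq eQa eQb eSa eSb hg'.
  by field: hs'2; rewrite nR0 (lt0r_neq0 hsr).
have hsig : sigma' = sigma0.
  rewrite /sigma0 -hrho hg'.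
  by field; rewrite (lt0r_neq0 hsr) addrC addKr (lt0r_neq0 hr).
subst rho' sigma'.
have hs : s' = s0 by [].
have hua : u o0 0 = u10.
  by rewrite /u10 -/Sa eSa hs mulrC mulKf // lt0r_neq0 // s_pos.
have hub : u o1 0 = u20.
  by rewrite /u20 -/Sb eSb hs mulrC mulKf // lt0r_neq0 // s_pos.
have [e he hce] : exists2 e : R, (e = 1 \/ e = -1) & u o2 0 = e * u30.
  have h3 := u3_sq.
  have : (u o2 0 - u30) * (u o2 0 + u30) = 0.
    have -> : (u o2 0 - u30) * (u o2 0 + u30) = u o2 0 ^+ 2 - u30 ^+ 2 by ring.
    rewrite h3 -usum hua hub; ring.
  move/eqP; rewrite mulf_eq0 => /orP [/eqP h|/eqP h].
    by exists 1; [left | rewrite mul1r; apply/eqP; rewrite -subr_eq0 h].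
  by exists (-1); [right | rewrite mulN1r; apply/eqP; rewrite -addr_eq0 h].
have he2 : e ^+ 2 = 1 by case: he => ->; rewrite ?expr1n ?sqrrN ?expr1n.
have ht := @uniq_t e (fun j => W o2 j) he2.
have hte : forall j, W o2 j = e * tpos j.
  apply: ht.
  - by rewrite sm hs hce.
  - have := ent o0 o2; rewrite o02 add0r hua hce => <-.
    by apply: eq_bigr => j _; rewrite W0.
  - have := ent o1 o2; rewrite o12 add0r hub hce => <-.
    by apply: eq_bigr => j _; rewrite W1.
  - by have := ent o2 o2; rewrite eqxx hce expr2 => <-.
exists e => //; rewrite hR.
apply/matrixP => i j; rewrite mxE.
case: i => [[|[|[|//]]] hi] /=.
- exact: h0.
- exact: h1.
- by rewrite -hte; congr (W _ j); apply: val_inj.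
Qed.

End Nondeg.

End Main.

Unset Implicit Arguments.
Set Strict Implicit.
Theorem theorem6p1 (R : rcfType) (n : nat) (al be : 'I_n -> R) (g : R) :
  (3 <= n)%N -> g < 1 ->
  (exists l : 'I_n, al l != 0 \/ be l != 0) ->
  cscale (g / n%:R) (cmul (csum al be) (csum al be)) = csumsq al be ->
  (forall N : nat, (3 <= N <= n)%N ->
     exists W : 'M[R]_(N, n), is_full_lift al be g W) /\
  (n%:R * (\sum_l cnorm2 (zof al be l)) + (g - 2) * cnorm2 (csum al be) != 0 ->
   let rho := 1/2 * (\sum_l cnorm2 (zof al be l))
              - g / (2 * n%:R) * cnorm2 (csum al be) in
   let sigma := g * rho / (1 - g) in
   let s := Num.sqrt (n%:R * (sigma + rho)) in
   let u1 := (\sum_l al l) / s in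
   let u2 := (\sum_l be l) / s in
   let u3 := Num.sqrt (1 - u1 ^+ 2 - u2 ^+ 2) in
   let A : 'M[R]_(3, n) := rows3 al be (fun _ => 1) in
   let b : 'cV[R]_3 := u3 *: (\col_(i < 3)
        (if val i == 0%N then sigma * u1 else if val i == 1%N then sigma * u2 else s)) in
   [/\ 0 < u3, \rank A = 3%N &
       forall W : 'M[R]_(3, n),
         is_lift al be g W <->
         exists2 e : R, (e = 1 \/ e = -1) &
           W = rows3 al be (fun j => (e *: (A^T *m invmx (A *m A^T) *m b)) j 0)]).
Proof.
move=> hn hg hnz hyp; split.
  by move=> N hN; exact: (exists_lift hn hg hnz hyp hN).
move=> hnd rho sigma s u1 u2 u3 A b; split.
- exact: (u3_pos hn hg hnz hyp hnd).
- exact: (rankA3 hn hg hnz hyp hnd).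
- move=> W; exact: (charac hn hg hnz hyp hnd W).
Qed.
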